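(* Let $0\le\sigma<1$, let $g(x)=\frac{\sin\log x}{\log x}$ for $0<x<1$, $g(0)=g(1)=0$, and $g_\sigma(x)=g(x)/x^\sigma$ for $0<x\le1$. There is a constant $C_\sigma$ depending only on $\sigma$ such that for all $\ell\ge1$, $$\Big|R_{g_\sigma}(\ell)-\int_0^1g_\sigma(t)\,dt\Big|\le\frac{C_\sigma}{\ell^{1-\sigma}},\qquad\text{where } R_{g_\sigma}(\ell)=\frac1\ell\sum_{k=1}^\ell g_\sigma\big(\tfrac k\ell\big).$$ Further, $\int_0^1g_\sigma(t)\,dt=\arctan\big(\frac{1}{1-\sigma}\big)$. *)

(* Defs.v *)
From Stdlib Require Import Reals Lra.
From Coquelicot Require Import Coquelicot.
Open Scope R_scope.

Definition g (x : R) : R :=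
  if Rlt_dec 0 x then if Rlt_dec x 1 then sin (ln x) / ln x else 0 else 0.

(* g_sigma(x) = g(x) / x^sigma for 0 < x <= 1; outside (0,1] we put 0
   (the value at 0 is irrelevant: not sampled by the Riemann sums, measure zero). *)
Definition g_sigma (sigma x : R) : R :=
  if Rlt_dec 0 x then if Rle_dec x 1 then g x / Rpower x sigma else 0 else 0.

Definition riemann_sum (sigma : R) (l : nat) : R :=
  / INR l * sum_n_m (fun k => g_sigma sigma (INR k / INR l)) 1 l.

Definition int_g_sigma (sigma : R) : R :=
  RInt_gen (g_sigma sigma) (at_right 0) (at_point 1).

(* Main.v *)
From Stdlib Require Import Reals Lra Lia.
Require Import Defs.
From Coquelicot Require Import Coquelicot.
Open Scope R_scope.
Definition phi (sg s x : R) := exp (- sg * ln x) * cos (s * ln x).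
Definition Aa (sg x s : R) := exp ((1 - sg) * ln x) * ((1 - sg) * cos (s * ln x) + s * sin (s * ln x)) / ((1 - sg)^2 + s^2).
Definition phi1 (sg s x : R) := exp (- sg * ln x) / x * (- sg * cos (s * ln x) - s * sin (s * ln x)).
Definition phi2 (sg s x : R) := exp (- sg * ln x) / (x * x) * ((sg * (sg + 1) - s^2) * cos (s * ln x) + s * (2 * sg + 1) * sin (s * ln x)).
Lemma exp1s sg x : 0 < x -> exp ((1 - sg) * ln x) = x * exp (- sg * ln x).
Proof. intros H. replace ((1 - sg) * ln x) with (ln x + - sg * ln x) by ring.
rewrite exp_plus, exp_ln; auto. Qed.
Lemma den_pos sg s : sg < 1 -> 0 < (1 - sg)^2 + s^2.
Proof. intros H. assert (0 < (1-sg)^2) by (apply pow_lt; lra). nra. Qed.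
Lemma exp_le x y : x <= y -> exp x <= exp y.
Proof. intros [H|H]; [left; apply exp_increasing; auto| subst; lra]. Qed.
Lemma d_A sg s x : sg < 1 -> 0 < x -> is_derive (fun x => Aa sg x s) x (phi sg s x).
Proof.
intros H1 H2. unfold Aa, phi.
auto_derive. { tauto. }
rewrite exp1s by auto. pose proof (den_pos sg s H1).
field. split; lra.
Qed.
Lemma d_phi sg s x : 0 < x -> is_derive (phi sg s) x (phi1 sg s x).
Proof.
intros H2. unfold phi, phi1.
auto_derive. { tauto. }
field. lra.
Qed.
Lemma d_phi1 sg s x : 0 < x -> is_derive (phi1 sg s) x (phi2 sg s x).
Proof.
intros H2. unfold phi1, phi2.
auto_derive. { repeat split; auto; lra. }
field. lra.
Qed.

Lemma cont_of_derive f x l : is_derive f x l -> continuity_pt f x.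
Proof. intros H. apply continuity_pt_filterlim. apply (ex_derive_continuous f x). exists l; exact H. Qed.

Lemma mvt_bound (G dG : R -> R) a b K : a <= b ->
  (forall t, a <= t <= b -> is_derive G t (dG t)) ->
  (forall t, a <= t <= b -> Rabs (dG t) <= K) -> Rabs (G b - G a) <= K * (b - a).
Proof.
intros Hab Hd HK.
destruct (MVT_gen G a b dG) as [c [Hc Hc2]].
- intros x Hx. rewrite Rmin_left in Hx by lra. rewrite Rmax_right in Hx by lra. apply Hd; lra.
- intros x Hx. rewrite Rmin_left in Hx by lra. rewrite Rmax_right in Hx by lra. apply (cont_of_derive _ _ (dG x)). apply Hd; lra.
- rewrite Rmin_left in Hc by lra. rewrite Rmax_right in Hc by lra.
  rewrite Hc2, Rabs_mult, (Rabs_right (b - a)) by lra.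
  apply Rmult_le_compat_r; [lra|]. apply HK; lra.
Qed.

Lemma trap (F f f1 f2 : R -> R) a h M : 0 < h ->
  (forall t, a <= t <= a + h -> is_derive F t (f t) /\ is_derive f t (f1 t) /\ is_derive f1 t (f2 t)) ->
  (forall t, a <= t <= a + h -> Rabs (f2 t) <= M) ->
  Rabs (F (a + h) - F a - h * (f a + f (a + h)) / 2) <= M * h ^ 3 / 2.
Proof.
intros Hh Hd HM.
set (U := fun t => (f t - f a) / 2 - (t - a) * f1 t / 2).
set (T := fun t => F t - F a - (t - a) * (f a + f t) / 2).
assert (HU : forall t, a <= t <= a + h -> Rabs (U t) <= M * h / 2 * h).
{ intros t Ht.
  assert (E : U t = U t - U a). { unfold U. lra. } rewrite E.
  eapply Rle_trans.
  apply (mvt_bound U (fun t => - (t - a) * f2 t / 2) a t (M * h / 2)); [lra| |].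
  - intros y Hy. destruct (Hd y ltac:(lra)) as [_ [H1 H2]].
    unfold U. auto_derive.
    + split; [exists (f1 y); auto| split; [exists (f2 y); auto| exact I]].
    + replace (Derive (fun x : R => f x) y) with (f1 y) by (symmetry; apply is_derive_unique; auto). replace (Derive (fun x : R => f1 x) y) with (f2 y) by (symmetry; apply is_derive_unique; auto). lra.
  - intros y Hy. specialize (HM y ltac:(lra)).
    replace (- (y - a) * f2 y / 2) with ((y - a) / 2 * (- f2 y)) by field.
    rewrite Rabs_mult, Rabs_Ropp, Rabs_right by lra.
    assert (0 <= Rabs (f2 y)) by apply Rabs_pos.
    assert (0 <= M) by lra. nra.
  - assert (0 <= M). { specialize (HM a ltac:(lra)). pose proof (Rabs_pos (f2 a)). lra. }
    apply Rmult_le_compat_l; [nra|lra]. }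
assert (E : F (a + h) - F a - h * (f a + f (a + h)) / 2 = T (a + h) - T a)
  by (unfold T; cbv beta; field).
rewrite E.
eapply Rle_trans.
apply (mvt_bound T U a (a + h) (M * h / 2 * h)); [lra| |].
- intros y Hy. destruct (Hd y ltac:(lra)) as [H0 [H1 _]].
  unfold T. auto_derive.
  + split; [exists (f y); auto| split; [exists (f1 y); auto| exact I]].
  + replace (Derive (fun x : R => F x) y) with (f y) by (symmetry; apply is_derive_unique; auto). replace (Derive (fun x : R => f x) y) with (f1 y) by (symmetry; apply is_derive_unique; auto). unfold U. lra.
- exact HU.
- right. field.
Qed.

Lemma bnd_phi sg s x : Rabs (phi sg s x) <= exp (- sg * ln x).
Proof.
unfold phi. rewrite Rabs_mult, (Rabs_right (exp _)) by (left; apply exp_pos).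
pose proof (exp_pos (- sg * ln x)). pose proof (COS_bound (s * ln x)).
assert (Rabs (cos (s * ln x)) <= 1) by (apply Rabs_le; lra). nra.
Qed.

Lemma bnd_A sg s x : 0 <= sg < 1 -> 0 <= s <= 1 ->
  Rabs (Aa sg x s) <= 2 * exp ((1 - sg) * ln x) / (1 - sg)^2.
Proof.
intros Hs Hs'. unfold Aa. pose proof (den_pos sg s (proj2 Hs)).
assert (P : 0 < (1 - sg)^2) by (apply pow_lt; lra).
pose proof (exp_pos ((1 - sg) * ln x)).
set (E := exp ((1 - sg) * ln x)).
pose proof (COS_bound (s * ln x)). pose proof (SIN_bound (s * ln x)).
assert (N : Rabs ((1 - sg) * cos (s * ln x) + s * sin (s * ln x)) <= 2).
{ apply Rabs_le. split; nra. }
assert (HE : E >= 0) by (unfold E; left; apply exp_pos).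
assert (HD : (1 - sg)^2 + s^2 >= 0) by lra.
unfold Rdiv. rewrite !Rabs_mult, Rabs_inv, (Rabs_right E HE), (Rabs_right _ HD).
apply Rle_trans with (E * 2 * / ((1 - sg) ^ 2 + s ^ 2)).
- apply Rmult_le_compat_r; [left; apply Rinv_0_lt_compat; lra|]. nra.
- rewrite (Rmult_comm 2 E). apply Rmult_le_compat_l; [nra|].
  apply Rinv_le_contravar; [lra|]. nra.
Qed.

Lemma bnd_phi2 sg s a t : 0 <= sg < 1 -> 0 <= s <= 1 -> 0 < a <= t ->
  Rabs (phi2 sg s t) <= 6 * exp (- sg * ln a) / (a * a).
Proof.
intros Hs Hs' Ha. unfold phi2.
pose proof (COS_bound (s * ln t)). pose proof (SIN_bound (s * ln t)).
assert (N : Rabs ((sg * (sg + 1) - s^2) * cos (s * ln t) + s * (2 * sg + 1) * sin (s * ln t)) <= 6).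
{ eapply Rle_trans; [apply Rabs_triang|]. rewrite !Rabs_mult.
  assert (Rabs (cos (s * ln t)) <= 1) by (apply Rabs_le; lra).
  assert (Rabs (sin (s * ln t)) <= 1) by (apply Rabs_le; lra).
  assert (Rabs (sg * (sg + 1) - s ^ 2) <= 3) by (apply Rabs_le; split; nra).
  rewrite (Rabs_right s), (Rabs_right (2 * sg + 1)) by lra.
  pose proof (Rabs_pos (cos (s * ln t))). pose proof (Rabs_pos (sin (s * ln t))).
  pose proof (Rabs_pos (sg * (sg + 1) - s ^ 2)).
  assert (s * (2 * sg + 1) <= 3) by nra. nra. }
assert (Ee : exp (- sg * ln t) <= exp (- sg * ln a)).
{ apply exp_le. assert (ln a <= ln t) by (apply ln_le; lra). nra. }
pose proof (exp_pos (- sg * ln t)).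
assert (Ia : / (t * t) <= / (a * a)). { apply Rinv_le_contravar; nra. }
assert (0 < / (t * t)) by (apply Rinv_0_lt_compat; nra).
unfold Rdiv. rewrite !Rabs_mult, Rabs_inv, (Rabs_right (exp _)) by lra.
rewrite (Rabs_right (t * t)) by nra.
pose proof (Rabs_pos ((sg * (sg + 1) - s^2) * cos (s * ln t) + s * (2 * sg + 1) * sin (s * ln t))).
apply Rle_trans with (exp (- sg * ln a) * / (a * a) * 6).
- apply Rmult_le_compat; [| |apply Rmult_le_compat; lra|exact N].
  + left. apply Rmult_lt_0_compat; lra.
  + apply Rabs_pos.
- right; ring.
Qed.

Lemma step sg s h m : 0 <= sg < 1 -> 0 <= s <= 1 -> 0 < h -> 1 <= m ->
  Rabs (Aa sg (m * h + h) s - Aa sg (m * h) s - h * (phi sg s (m * h) + phi sg s (m * h + h)) / 2)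
  <= 3 * (h * exp (- sg * ln h)) / (m * m).
Proof.
intros Hs Hs' Hh Hm.
assert (Hmh : h <= m * h) by nra.
eapply Rle_trans.
{ apply (trap (fun x => Aa sg x s) (phi sg s) (phi1 sg s) (phi2 sg s) (m * h) h
          (6 * exp (- sg * ln (m * h)) / ((m * h) * (m * h)))); [exact Hh| |].
  - intros t Ht. split; [apply d_A; lra|]. split; [apply d_phi; nra| apply d_phi1; nra].
  - intros t Ht. apply bnd_phi2; auto. nra. }
assert (Ee : exp (- sg * ln (m * h)) <= exp (- sg * ln h)).
{ apply exp_le. assert (ln h <= ln (m * h)) by (apply ln_le; lra). nra. }
pose proof (exp_pos (- sg * ln (m * h))).
replace (6 * exp (- sg * ln (m * h)) / (m * h * (m * h)) * h ^ 3 / 2)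
  with (3 * (h * exp (- sg * ln (m * h))) / (m * m)) by (field; lra).
unfold Rdiv. apply Rmult_le_compat_r; [left; apply Rinv_0_lt_compat; nra|].
apply Rmult_le_compat_l; [lra|]. apply Rmult_le_compat_l; lra.
Qed.

Lemma plusR (a b : R) : plus a b = a + b.
Proof. reflexivity. Qed.

Lemma ind sg s h : 0 <= sg < 1 -> 0 <= s <= 1 -> 0 < h -> forall m, (1 <= m)%nat ->
  Rabs (h * sum_n_m (fun k => phi sg s (INR k * h)) 1 m - Aa sg (INR m * h) s - h / 2 * phi sg s (INR m * h))
  <= (1/2 + 2 / (1 - sg)^2) * (h * exp (- sg * ln h)) + 6 * (h * exp (- sg * ln h)) * (1 - / INR m).
Proof.
intros Hs Hs' Hh m Hm.
set (H := h * exp (- sg * ln h)).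
assert (HH : 0 < H) by (unfold H; pose proof (exp_pos (- sg * ln h)); nra).
assert (P : 0 < (1 - sg)^2) by (apply pow_lt; lra).
induction m as [|m IH]; [lia|].
destruct (Nat.eq_dec m 0) as [->|Hm0].
- rewrite sum_n_n. replace (INR 1 * h) with h by (simpl; ring).
  replace (1 - / INR 1) with 0 by (simpl; field).
  pose proof (bnd_phi sg s h). pose proof (bnd_A sg s h Hs Hs').
  rewrite exp1s in H1 by lra. fold H in H1.
  assert (Rabs (h / 2 * phi sg s h) <= H / 2).
  { unfold Rdiv. rewrite Rabs_mult, Rabs_mult, (Rabs_right h), (Rabs_right (/2)) by lra.
    unfold H. nra. }
  replace (h * phi sg s h - Aa sg h s - h / 2 * phi sg s h) with (h / 2 * phi sg s h + - Aa sg h s) by field.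
  eapply Rle_trans; [apply Rabs_triang|]. rewrite Rabs_Ropp.
  assert (2 * H / (1 - sg)^2 = 2 / (1 - sg)^2 * H) by (field; lra). lra.
- specialize (IH ltac:(lia)).
  rewrite sum_n_Sm by lia. rewrite plusR.
  rewrite S_INR.
  assert (Hm1 : 1 <= INR m) by (apply (le_INR 1); lia).
  pose proof (step sg s h (INR m) Hs Hs' Hh Hm1) as St. fold H in St.
  replace ((INR m + 1) * h) with (INR m * h + h) by ring.
  replace (h * (sum_n_m (fun k : nat => phi sg s (INR k * h)) 1 m + phi sg s (INR m * h + h)) -
     Aa sg (INR m * h + h) s - h / 2 * phi sg s (INR m * h + h))
   with ((h * sum_n_m (fun k : nat => phi sg s (INR k * h)) 1 m - Aa sg (INR m * h) s - h / 2 * phi sg s (INR m * h))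
     + - (Aa sg (INR m * h + h) s - Aa sg (INR m * h) s - h * (phi sg s (INR m * h) + phi sg s (INR m * h + h)) / 2)) by field.
  eapply Rle_trans; [apply Rabs_triang|]. rewrite Rabs_Ropp.
  assert (3 * H / (INR m * INR m) <= 6 * H * (/ INR m - / (INR m + 1))).
  { replace (/ INR m - / (INR m + 1)) with (/ (INR m * (INR m + 1))) by (field; lra).
    unfold Rdiv. rewrite Rmult_assoc. replace (6 * H * / (INR m * (INR m + 1))) with (3 * (H * (2 * / (INR m * (INR m + 1))))) by ring.
    apply Rmult_le_compat_l; [lra|]. apply Rmult_le_compat_l; [lra|].
    replace (2 * / (INR m * (INR m + 1))) with (/ (INR m * (INR m + 1) / 2)) by (field; lra).
    apply Rinv_le_contravar; nra. }
  lra.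
Qed.

Lemma phi_1 sg s : phi sg s 1 = 1.
Proof. unfold phi. rewrite ln_1, !Rmult_0_r, exp_0, cos_0. ring. Qed.

Lemma A_1 sg s : sg < 1 -> Aa sg 1 s = (1 - sg) / ((1 - sg)^2 + s^2).
Proof. intros Hs. unfold Aa. rewrite ln_1, !Rmult_0_r, exp_0, cos_0, sin_0. pose proof (den_pos sg s Hs). field. lra. Qed.

Lemma riem_phi sg s l : 0 <= sg < 1 -> 0 <= s <= 1 -> (1 <= l)%nat ->
  Rabs (/ INR l * sum_n_m (fun k => phi sg s (INR k * / INR l)) 1 l - Aa sg 1 s)
  <= (1/2 + 2 / (1 - sg)^2 + 6) * (/ INR l * exp (- sg * ln (/ INR l))) + / INR l / 2.
Proof.
intros Hs Hs' Hl.
assert (Hl0 : 0 < INR l) by (apply lt_0_INR; lia).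
assert (Hh : 0 < / INR l) by (apply Rinv_0_lt_compat; lra).
pose proof (ind sg s (/ INR l) Hs Hs' Hh l Hl) as I.
replace (INR l * / INR l) with 1 in I by (field; lra).
rewrite phi_1 in I.
set (H := / INR l * exp (- sg * ln (/ INR l))) in *.
assert (HH : 0 < H) by (unfold H; pose proof (exp_pos (- sg * ln (/ INR l))); nra).
assert (0 <= 1 - / INR l). { assert (1 <= INR l) by (apply (le_INR 1); lia).
  assert (/ INR l <= 1). { rewrite <- Rinv_1. apply Rinv_le_contravar; lra. } lra. }
assert (1 - / INR l <= 1) by lra.
replace (/ INR l * sum_n_m (fun k : nat => phi sg s (INR k * / INR l)) 1 l - Aa sg 1 s)
  with ((/ INR l * sum_n_m (fun k : nat => phi sg s (INR k * / INR l)) 1 l - Aa sg 1 s - / INR l / 2 * 1) + / INR l / 2) by (field; lra).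
eapply Rle_trans; [apply Rabs_triang|]. rewrite (Rabs_right (/ INR l / 2)) by lra.
assert (6 * H * (1 - / INR l) <= 6 * H) by nra.
lra.
Qed.

Lemma is_derive_sum_nm (F : R -> nat -> R) (dF : nat -> R) x n : forall m,
  (forall k, is_derive (fun s => F s k) x (dF k)) ->
  is_derive (fun s => sum_n_m (F s) n m) x (sum_n_m dF n m).
Proof.
induction m as [|m IH]; intros Hd.
- destruct n as [|n].
  + rewrite sum_n_n. apply (is_derive_ext (fun s => F s 0%nat)); [intros t; now rewrite sum_n_n| apply Hd].
  + rewrite sum_n_m_zero by lia.
    apply (is_derive_ext (fun _ => 0)); [intros t; rewrite sum_n_m_zero by lia; reflexivity|].
    auto_derive; reflexivity.
- destruct (Compare_dec.le_lt_dec n (S m)) as [Hn|Hn].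
  + rewrite sum_n_Sm by lia.
    apply (is_derive_ext (fun s => sum_n_m (F s) n m + F s (S m))); [intros t; rewrite sum_n_Sm by lia; reflexivity|].
    apply (is_derive_plus (fun s => sum_n_m (F s) n m) (fun s => F s (S m)) x _ _ (IH Hd) (Hd (S m))).
  + rewrite sum_n_m_zero by lia.
    apply (is_derive_ext (fun _ => 0)); [intros t; rewrite sum_n_m_zero by lia; reflexivity|].
    auto_derive; reflexivity.
Qed.

Lemma d_atan c s : 0 < c -> is_derive (fun s => atan (s / c)) s (c / (c^2 + s^2)).
Proof.
intros Hc.
assert (E : c / (c^2 + s^2) = scal (/ c) (/ (1 + (s / c)^2))).
{ unfold scal; simpl. unfold mult; simpl. field. split; [lra|]. 
  assert (0 < c^2) by (apply pow_lt; lra). nra. }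
rewrite E. apply (is_derive_comp atan (fun s => s / c)).
- apply is_derive_Reals. apply derivable_pt_lim_atan.
- auto_derive; [lra| field; lra].
Qed.

Definition Qx sg s x := if Rlt_dec 0 x then if Rlt_dec x 1 then exp (- sg * ln x) * sin (s * ln x) / ln x else 0 else 0.
Definition dQx sg s x := if Rlt_dec 0 x then if Rlt_dec x 1 then phi sg s x else 0 else 0.

Lemma ln_neg x : 0 < x -> x < 1 -> ln x < 0.
Proof. intros. rewrite <- ln_1. apply ln_increasing; lra. Qed.

Lemma d_Qx sg x s : is_derive (fun s => Qx sg s x) s (dQx sg s x).
Proof.
unfold Qx, dQx. destruct (Rlt_dec 0 x); [destruct (Rlt_dec x 1)|].
- pose proof (ln_neg x r r0). unfold phi. auto_derive; [exact I| field; lra].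
- auto_derive; [exact I| reflexivity].
- auto_derive; [exact I| reflexivity].
Qed.

Lemma Qx_0 sg x : Qx sg 0 x = 0.
Proof. unfold Qx. destruct (Rlt_dec 0 x); [destruct (Rlt_dec x 1)|]; try reflexivity.
rewrite Rmult_0_l, sin_0. unfold Rdiv. ring. Qed.

Lemma Qx_1 sg x : 0 < x <= 1 -> Qx sg 1 x = g_sigma sg x.
Proof. intros Hx. unfold Qx, g_sigma, g.
destruct (Rlt_dec 0 x); [|lra]. destruct (Rle_dec x 1); [|lra].
destruct (Rlt_dec x 1).
- unfold Rpower. rewrite Rmult_1_l. replace (- sg * ln x) with (- (sg * ln x)) by ring.
  rewrite exp_Ropp. unfold Rdiv. ring.
- unfold Rdiv. ring.
Qed.

Lemma dQ_sum sg s l : (1 <= l)%nat ->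
  sum_n_m (fun k => dQx sg s (INR k * / INR l)) 1 l = sum_n_m (fun k => phi sg s (INR k * / INR l)) 1 l - 1.
Proof.
intros Hl. assert (Hl0 : 0 < INR l) by (apply lt_0_INR; lia).
destruct l as [|l']; [lia|].
rewrite !sum_n_Sm by lia. rewrite !plusR.
replace (INR (S l') * / INR (S l')) with 1 by (field; lra).
rewrite phi_1. unfold dQx at 2. destruct (Rlt_dec 0 1); [|lra]. destruct (Rlt_dec 1 1); [lra|].
rewrite (sum_n_m_ext_loc (fun k => dQx sg s (INR k * / INR (S l'))) (fun k => phi sg s (INR k * / INR (S l')))).
{ unfold plus; simpl. lra. }
intros k Hk. unfold dQx.
assert (1 <= INR k) by (apply (le_INR 1); lia).
assert (INR k < INR (S l')) by (apply lt_INR; lia).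
destruct (Rlt_dec 0 (INR k * / INR (S l'))) as [_|Hq].
2:{ exfalso. apply Hq. apply Rmult_lt_0_compat; [lra| apply Rinv_0_lt_compat; lra]. }
destruct (Rlt_dec (INR k * / INR (S l')) 1) as [_|Hq]; [reflexivity|].
exfalso. apply Hq. apply (Rmult_lt_reg_r (INR (S l'))); [lra|]. field_simplify; lra.
Qed.

Lemma part1 sg : 0 <= sg < 1 -> exists C : R, forall l : nat, (1 <= l)%nat ->
  Rabs (riemann_sum sg l - atan (1 / (1 - sg))) <= C / Rpower (INR l) (1 - sg).
Proof.
intros Hs. exists (1/2 + 2 / (1 - sg)^2 + 8). intros l Hl.
assert (Hl0 : 0 < INR l) by (apply lt_0_INR; lia).
assert (Hl1 : 1 <= INR l) by (apply (le_INR 1); lia).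
set (h := / INR l).
assert (Hh : 0 < h) by (apply Rinv_0_lt_compat; lra).
assert (Hh1 : h <= 1) by (unfold h; rewrite <- Rinv_1; apply Rinv_le_contravar; lra).
set (H := h * exp (- sg * ln h)).
assert (HH : H = / Rpower (INR l) (1 - sg)).
{ unfold H. rewrite <- exp1s by lra. unfold h. rewrite ln_Rinv by lra. unfold Rpower.
  rewrite <- exp_Ropp. f_equal. ring. }
assert (HhH : h <= H).
{ unfold H. assert (ln h <= 0) by (rewrite <- ln_1; apply ln_le; lra).
  assert (1 <= exp (- sg * ln h)) by (rewrite <- exp_0; apply exp_le; nra). nra. }
set (E := fun s => h * sum_n_m (fun k => Qx sg s (INR k * h)) 1 l - atan (s / (1 - sg))).
set (dE := fun s => h * sum_n_m (fun k => dQx sg s (INR k * h)) 1 l - (1 - sg) / ((1 - sg)^2 + s^2)).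
assert (E1 : riemann_sum sg l - atan (1 / (1 - sg)) = E 1 - E 0).
{ unfold E, riemann_sum. fold h.
  rewrite (sum_n_m_ext_loc (fun k => Qx sg 0 (INR k * h)) (fun _ => zero)).
  2:{ intros k _. rewrite Qx_0. reflexivity. }
  rewrite sum_n_m_const_zero. replace (0 / (1 - sg)) with 0 by (field; lra). rewrite atan_0.
  rewrite (sum_n_m_ext_loc (fun k => g_sigma sg (INR k / INR l)) (fun k => Qx sg 1 (INR k * h))).
  { change (@zero R_AbelianMonoid) with 0. lra. }
  intros k Hk. rewrite Qx_1. { reflexivity. }
  assert (1 <= INR k) by (apply (le_INR 1); lia).
  assert (INR k <= INR l) by (apply le_INR; lia).
  unfold h. split; [apply Rmult_lt_0_compat; [lra| apply Rinv_0_lt_compat; lra]|].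
  apply (Rmult_le_reg_r (INR l)); [lra|]. field_simplify; lra. }
rewrite E1.
eapply Rle_trans.
{ apply (mvt_bound E dE 0 1 ((1/2 + 2 / (1 - sg)^2 + 6) * H + h / 2 + h)); [lra| |].
  - intros t Ht. unfold E, dE.
    apply (is_derive_minus (fun s => h * sum_n_m (fun k => Qx sg s (INR k * h)) 1 l) (fun s => atan (s / (1 - sg)))).
    + apply (is_derive_scal (fun s => sum_n_m (fun k => Qx sg s (INR k * h)) 1 l) t h).
      apply (is_derive_sum_nm (fun s k => Qx sg s (INR k * h))).
      intros k. apply d_Qx.
    + replace ((1 - sg) / ((1 - sg) ^ 2 + t ^ 2)) with ((1 - sg) / ((1 - sg) ^ 2 + t ^ 2)) by reflexivity.
      apply d_atan. lra.
  - intros t Ht. unfold dE. unfold h. rewrite dQ_sum by auto. fold h.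
    rewrite <- (A_1 sg t) by lra.
    pose proof (riem_phi sg t l Hs Ht Hl) as R. fold h in R. fold H in R.
    replace (h * (sum_n_m (fun k : nat => phi sg t (INR k * h)) 1 l - 1) - Aa sg 1 t)
      with ((h * sum_n_m (fun k : nat => phi sg t (INR k * h)) 1 l - Aa sg 1 t) + - h) by ring.
    eapply Rle_trans; [apply Rabs_triang|]. rewrite Rabs_Ropp, (Rabs_right h) by lra. lra. }
rewrite Rminus_0_r, Rmult_1_r. replace ((1/2 + 2/(1-sg)^2 + 8) / Rpower (INR l) (1 - sg)) with ((1/2 + 2/(1-sg)^2 + 8) * H) by (rewrite HH; reflexivity).
assert (0 < H) by lra. assert (0 <= 2 / (1 - sg)^2) by (unfold Rdiv; apply Rmult_le_pos; [lra| left; apply Rinv_0_lt_compat, pow_lt; lra]). nra.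
Qed.

Lemma c2_comp (F : R -> R) (g : R -> R -> R) x t :
  ex_derive F (g x t) -> continuity_2d_pt g x t -> continuity_2d_pt (fun u v => F (g u v)) x t.
Proof. intros [l Hl] Hg. apply continuity_1d_2d_pt_comp; auto. apply (cont_of_derive _ _ l Hl). Qed.

Lemma c2_ln x t : 0 < x -> continuity_2d_pt (fun u v => ln u) x t.
Proof. intros Hx. apply (c2_comp ln (fun u v => u)); [auto_derive; lra| apply continuity_2d_pt_id1]. Qed.

Lemma c2_exp sg x t : 0 < x -> continuity_2d_pt (fun u v => exp (- sg * ln u)) x t.
Proof. intros Hx. apply (c2_comp (fun z => exp (- sg * z)) (fun u v => ln u)); [auto_derive; auto| apply c2_ln; auto]. Qed.

Lemma c2_vln x t : 0 < x -> continuity_2d_pt (fun u v => v * ln u) x t.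
Proof. intros Hx. apply (continuity_2d_pt_mult (fun u v => v) (fun u v => ln u)); [apply continuity_2d_pt_id2| apply c2_ln; auto]. Qed.

Lemma c2_phi sg x t : 0 < x -> continuity_2d_pt (fun u v => phi sg v u) x t.
Proof. intros Hx. unfold phi.
apply (continuity_2d_pt_mult (fun u v => exp (- sg * ln u)) (fun u v => cos (v * ln u))).
- apply c2_exp; auto.
- apply (c2_comp cos (fun u v => v * ln u)); [auto_derive; auto| apply c2_vln; auto].
Qed.

Lemma c2_phi1 sg x t : 0 < x -> continuity_2d_pt (fun u v => phi1 sg v u) x t.
Proof. intros Hx. unfold phi1.
apply (continuity_2d_pt_mult (fun u v => exp (- sg * ln u) / u) (fun u v => - sg * cos (v * ln u) - v * sin (v * ln u))).
- apply (continuity_2d_pt_mult (fun u v => exp (- sg * ln u)) (fun u v => / u)).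
  + apply c2_exp; auto.
  + apply (c2_comp Rinv (fun u v => u)); [auto_derive; lra| apply continuity_2d_pt_id1].
- apply (continuity_2d_pt_minus (fun u v => - sg * cos (v * ln u)) (fun u v => v * sin (v * ln u))).
  + apply (c2_comp (fun z => - sg * cos z) (fun u v => v * ln u)); [auto_derive; auto| apply c2_vln; auto].
  + apply (continuity_2d_pt_mult (fun u v => v) (fun u v => sin (v * ln u))); [apply continuity_2d_pt_id2|].
    apply (c2_comp sin (fun u v => v * ln u)); [auto_derive; auto| apply c2_vln; auto].
Qed.

Definition Wf sg x := RInt (fun s => Aa sg x s) 0 1.
Definition Df sg x := RInt (fun s => phi sg s x) 0 1.

Lemma cont_R (f : R -> R) x : ex_derive f x -> continuous f x.
Proof. intros H. exact (@ex_derive_continuous R_AbsRing R_NormedModule f x H). Qed.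

Lemma loc_pos x : 0 < x -> locally x (fun y => 0 < y).
Proof. intros Hx. apply (locally_interval _ x 0 p_infty); simpl; auto. Qed.

Lemma loc2_pos x t (P : R -> R -> Prop) : 0 < x -> (forall u v, 0 < u -> P u v) -> locally_2d P x t.
Proof. intros Hx HP. assert (Hx2 : 0 < x / 2) by lra. exists (mkposreal _ Hx2). simpl.
intros u v Hu _. apply HP. apply Rabs_lt_between in Hu. lra. Qed.

Lemma dW sg x : 0 <= sg < 1 -> 0 < x -> is_derive (Wf sg) x (Df sg x).
Proof.
intros Hs Hx. unfold Wf.
assert (H := is_derive_RInt_param (fun u t => Aa sg u t) 0 1 x).
unfold Df. replace (RInt (fun s : R => phi sg s x) 0 1) with (RInt (fun t : R => Derive (fun u : R => Aa sg u t) x) 0 1).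
{ apply H.
  - apply (filter_imp (fun y => 0 < y)); [|apply loc_pos; auto].
    intros y Hy t _. exists (phi sg t y). apply d_A; lra.
  - intros t _. apply (continuity_2d_pt_ext_loc (fun u v => phi sg v u)).
    + apply loc2_pos; auto. intros u v Hu. symmetry. apply is_derive_unique. apply d_A; lra.
    + apply c2_phi; auto.
  - apply filter_forall. intros y. apply (@ex_RInt_continuous R_CompleteNormedModule). intros z _.
    assert (Hc : ex_derive (fun t => Aa sg y t) z).
    { unfold Aa. auto_derive. pose proof (den_pos sg z (proj2 Hs)). lra. }
    exact (cont_R _ _ Hc). }
apply RInt_ext. intros t _. apply is_derive_unique. apply d_A; lra.
Qed.

Lemma dD sg x : 0 < x -> ex_derive (Df sg) x.
Proof.
intros Hx. unfold Df.
eexists. apply (is_derive_RInt_param (fun u t => phi sg t u) 0 1 x).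
- apply (filter_imp (fun y => 0 < y)); [|apply loc_pos; auto].
  intros y Hy t _. exists (phi1 sg t y). apply d_phi; lra.
- intros t _. apply (continuity_2d_pt_ext_loc (fun u v => phi1 sg v u)).
  + apply loc2_pos; auto. intros u v Hu. symmetry. apply is_derive_unique. apply d_phi; lra.
  + apply c2_phi1; auto.
- apply filter_forall. intros y. apply (@ex_RInt_continuous R_CompleteNormedModule). intros z _.
  assert (Hc : ex_derive (fun t => phi sg t y) z) by (unfold phi; auto_derive; exact I).
  exact (cont_R _ _ Hc).
Qed.

Lemma Df_val sg x : 0 < x < 1 -> Df sg x = Qx sg 1 x.
Proof.
intros Hx. pose proof (ln_neg x (proj1 Hx) (proj2 Hx)).
unfold Df. apply is_RInt_unique.
unfold Qx. destruct (Rlt_dec 0 x); [|lra]. destruct (Rlt_dec x 1); [|lra].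
replace (exp (- sg * ln x) * sin (1 * ln x) / ln x) with
  (minus (exp (- sg * ln x) * sin (1 * ln x) / ln x) (exp (- sg * ln x) * sin (0 * ln x) / ln x)).
2:{ rewrite Rmult_0_l, sin_0. unfold minus, plus, opp; simpl. field. lra. }
apply (is_RInt_derive (fun s => exp (- sg * ln x) * sin (s * ln x) / ln x)).
- intros s _. unfold phi. auto_derive; [exact I| field; lra].
- intros s _. assert (Hc : ex_derive (fun s => phi sg s x) s) by (unfold phi; auto_derive; exact I).
  exact (cont_R _ _ Hc).
Qed.

Lemma W1 sg : 0 <= sg < 1 -> Wf sg 1 = atan (1 / (1 - sg)).
Proof.
intros Hs. unfold Wf.
rewrite (RInt_ext _ (fun s => (1 - sg) / ((1 - sg)^2 + s^2))).
2:{ intros s _. apply A_1. lra. }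
apply is_RInt_unique.
replace (atan (1 / (1 - sg))) with (minus (atan (1 / (1 - sg))) (atan (0 / (1 - sg)))).
2:{ replace (0 / (1 - sg)) with 0 by (field; lra). rewrite atan_0. unfold minus, plus, opp; simpl. ring. }
apply (is_RInt_derive (fun s => atan (s / (1 - sg)))).
- intros s _. apply d_atan. lra.
- intros s _. assert (Hc : ex_derive (fun s => (1 - sg) / ((1 - sg)^2 + s^2)) s).
  { auto_derive. pose proof (den_pos sg s (proj2 Hs)). lra. }
  exact (cont_R _ _ Hc).
Qed.

Lemma Wbound sg a : 0 <= sg < 1 -> 0 < a -> Rabs (Wf sg a) <= 2 * exp ((1 - sg) * ln a) / (1 - sg)^2.
Proof.
intros Hs Ha. unfold Wf.
replace (2 * exp ((1 - sg) * ln a) / (1 - sg)^2) with ((1 - 0) * (2 * exp ((1 - sg) * ln a) / (1 - sg)^2)) by ring.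
apply abs_RInt_le_const; [lra| |].
- apply (@ex_RInt_continuous R_CompleteNormedModule). intros z _.
  assert (Hc : ex_derive (fun t => Aa sg a t) z).
  { unfold Aa. auto_derive. pose proof (den_pos sg z (proj2 Hs)). lra. }
  exact (cont_R _ _ Hc).
- intros t Ht. apply bnd_A; auto.
Qed.

Lemma core sg a : 0 <= sg < 1 -> 0 < a -> a < 1 -> is_RInt (g_sigma sg) a 1 (Wf sg 1 - Wf sg a).
Proof.
intros Hs Ha Ha1.
apply (is_RInt_ext (Df sg)).
{ rewrite Rmin_left, Rmax_right by lra. intros x Hx. rewrite Df_val by lra. apply Qx_1. lra. }
apply (is_RInt_derive (Wf sg) (Df sg) a 1).
- intros x Hx. rewrite Rmin_left, Rmax_right in Hx by lra. apply dW; auto; lra.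
- intros x Hx. rewrite Rmin_left, Rmax_right in Hx by lra. apply cont_R. apply dD. lra.
Qed.

Lemma part2 sg : 0 <= sg < 1 -> is_RInt_gen (g_sigma sg) (at_right 0) (at_point 1) (atan (1 / (1 - sg))).
Proof.
intros Hs. unfold is_RInt_gen, filterlimi, filter_le, filtermapi. intros P [eps HP].
assert (P2 : 0 < (1 - sg)^2) by (apply pow_lt; lra).
set (c := eps * (1 - sg)^2 / 2).
assert (Hc : 0 < c) by (unfold c; pose proof (cond_pos eps); nra).
set (d := Rmin 1 (exp (ln c / (1 - sg)))).
assert (Hd : 0 < d) by (unfold d; apply Rmin_glb_lt; [lra| apply exp_pos]).
apply Filter_prod with (Q := fun a => 0 < a < d) (R := fun b => b = 1).
- unfold at_right, within. apply (locally_interval _ 0 m_infty d); simpl; auto.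
- unfold at_point. reflexivity.
- intros x y [Hx0 Hxd] Hy. subst y. simpl. exists (Wf sg 1 - Wf sg x). split.
  + apply core; auto. assert (d <= 1) by apply Rmin_l. lra.
  + apply HP. rewrite W1 by auto.
    unfold ball; simpl; unfold AbsRing_ball; simpl. unfold abs, minus, plus, opp; simpl.
    replace (atan (1 / (1 - sg)) - Wf sg x + - atan (1 / (1 - sg))) with (- Wf sg x) by ring.
    rewrite Rabs_Ropp. eapply Rle_lt_trans; [apply Wbound; auto|].
    assert (Hx' : x < exp (ln c / (1 - sg))) by (assert (d <= exp (ln c / (1 - sg))) by apply Rmin_r; lra).
    assert (L1 : ln x < ln c / (1 - sg)) by (rewrite <- (ln_exp (ln c / (1 - sg))); apply ln_increasing; lra).
    assert (L2 : (1 - sg) * ln x < ln c).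
    { replace (ln c) with ((1 - sg) * (ln c / (1 - sg))) by (field; lra). apply Rmult_lt_compat_l; lra. }
    assert (L3 : exp ((1 - sg) * ln x) < c) by (rewrite <- (exp_ln c) by auto; apply exp_increasing; auto).
    unfold c in L3. apply (Rmult_lt_reg_r ((1 - sg)^2)); [lra|]. field_simplify; [|lra]. lra.
Qed.

Theorem lemma5p9 (sigma : R) (Hs0 : 0 <= sigma) (Hs1 : sigma < 1) :
  (exists C : R, forall l : nat, (1 <= l)%nat ->
     Rabs (riemann_sum sigma l - int_g_sigma sigma) <= C / Rpower (INR l) (1 - sigma))
  /\ is_RInt_gen (g_sigma sigma) (at_right 0) (at_point 1) (atan (1 / (1 - sigma)))
  /\ int_g_sigma sigma = atan (1 / (1 - sigma)).
Proof.
assert (Hs : 0 <= sigma < 1) by lra.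
assert (I : int_g_sigma sigma = atan (1 / (1 - sigma))).
{ unfold int_g_sigma. apply is_RInt_gen_unique. apply part2; auto. }
split; [|split; [apply part2; auto| exact I]].
rewrite I. apply part1; auto.
Qed.
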